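(* (i) If the communicated systems are qubits composed according to quantum theory (i.e. $k$ qubits form the quantum system on $(\mathbb{C}^2)^{\otimes k}$), then the game $\mathcal{P}_D^{[12]}$ cannot be won perfectly with $3$ qubits but can be won perfectly with $4$ qubits; hence $4$ qubits of communication are required. (ii) In the $SEP$ composition $\mathbb{C}^2\otimes_{\min}\mathbb{C}^2$ of two qubits, the twelve product states $$\mathcal{A}=\{|\kappa\kappa\rangle,\ |\kappa\bar\kappa\rangle,\ |\bar\kappa\kappa\rangle,\ |\bar\kappa\bar\kappa\rangle\}_{\kappa\in\{x,y,z\}}$$ (as density operators) are pairwise distinguishable; consequently two $SEP$-bits suffice to win $\mathcal{P}_D^{[12]}$ perfectly.
   Context: A quantum system on Hilbert space $\mathcal{H}$ has states the density operators on $\mathcal{H}$ and measurements the POVMs. $SEP$ composition of $m$ qubits ($m$ ''$SEP$-bits''; for $m=2$ written $\mathbb{C}^2\otimes_{\min}\mathbb{C}^2$): the state cone is the set of finite sums of tensor products $\pi_1\otimes\cdots\otimes\pi_m$ of positive semidefinite operators on $\mathbb{C}^2$; normalized states are the fully separable density operators on $(\mathbb{C}^2)^{\otimes m}$; the effect cone is its dual $\{Y \text{ Hermitian}: \operatorname{Tr}(XY)\ge 0 \text{ for all } X \text{ in the state cone}\}$; a measurement is a finite family of elements of the dual cone summing to the identity, with outcome probabilities $\operatorname{Tr}(E_i\rho)$. A set of states $\{\omega_i\}$ is pairwise distinguishable if for every $i\neq j$ there is a two-outcome measurement $\{E,\mathbf 1-E\}$ with $\operatorname{Tr}(E\omega_i)=1$,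 $\operatorname{Tr}(E\omega_j)=0$. Here $|\alpha\beta\rangle=|\alpha\rangle\otimes|\beta\rangle$ and $|\kappa\rangle$ ($|\bar\kappa\rangle$) is the eigenvector of the Pauli operator $\sigma_\kappa$ with eigenvalue $+1$ ($-1$). The game $\mathcal{P}_D^{[n]}$: a referee gives Alice a message $\eta$ from a set $\mathcal{N}$, $|\mathcal{N}|=n$, and asks Bob whether Alice's message was $\eta$ or $\eta'$ for some $\eta'\neq\eta$; Alice and Bob share no correlations, Alice encodes $\eta$ into a state $\omega_\eta$ of the communicated system and sends it to Bob, who for each unordered pair $\{\eta,\eta'\}$ performs a measurement whose outcome is his answer; perfect winning means Bob answers correctly with probability $1$ for every $\eta$ and every $\eta'\neq\eta$. *)

(* Defs.v *)
(* complex matrices over an arbitrary numClosedFieldType C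
   (an algebraically closed field with conjugation, e.g. C = R[i]). *)
From HB Require Import structures.
From mathcomp Require Import all_boot all_order all_algebra.
From mathcomp Require Import mxtens.
Set Implicit Arguments. Unset Strict Implicit. Unset Printing Implicit Defensive.
Import Order.TTheory GRing.Theory Num.Theory.
Local Open Scope ring_scope.

Section QDefs.
Variable C : numClosedFieldType.

Definition hadj m n (A : 'M[C]_(m, n)) : 'M[C]_(n, m) := (map_mx Num.conj A)^T.

Definition hermitian n (A : 'M[C]_n) : Prop := hadj A = A.

Definition psd n (A : 'M[C]_n) : Prop :=
  hermitian A /\ forall v : 'cV[C]_n, 0 <= (hadj v *m A *m v) 0 0.

Definition density n (A : 'M[C]_n) : Prop := psd A /\ \tr A = 1.

Definition prob n (E rho : 'M[C]_n) : C := \tr (E *m rho).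

Definition q_state d (A : 'M[C]_d) : Prop := density A.
Definition q_effect d (A : 'M[C]_d) : Prop := psd A.

Definition sep2_cone (X : 'M[C]_(2 * 2)) : Prop :=
  exists (m : nat) (A B : 'I_m -> 'M[C]_2),
    (forall i, psd (A i) /\ psd (B i)) /\ X = \sum_(i < m) tensmx (A i) (B i).
Definition sep2_state (X : 'M[C]_(2 * 2)) : Prop := sep2_cone X /\ \tr X = 1.
Definition sep2_effect (Y : 'M[C]_(2 * 2)) : Prop :=
  hermitian Y /\ forall X, sep2_cone X -> 0 <= \tr (X *m Y).

Definition measurement d (effect : 'M[C]_d -> Prop) (I : finType)
  (E : I -> 'M[C]_d) : Prop :=
  (forall i, effect (E i)) /\ \sum_i E i = 1%:M.

Definition pairwise_distinguishable d (effect : 'M[C]_d -> Prop) (I : finType)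
  (w : I -> 'M[C]_d) : Prop :=
  forall i j, i != j -> exists E : 'M[C]_d,
    measurement effect (fun b : bool => if b then E else 1%:M - E) /\
    prob E (w i) = 1 /\ prob E (w j) = 0.

(* Perfect winning of the game P_D^[n]: Alice encodes each message
   eta in 'I_n into a state omega eta; for each unordered pair {i, j}
   (i < j) Bob performs a two-outcome measurement with outcomes
   true = "the message was i", false = "the message was j", and answers
   correctly with probability 1 whichever of i, j was sent. *)
Definition wins_PD (n d : nat) (state effect : 'M[C]_d -> Prop) : Prop :=
  exists omega : 'I_n -> 'M[C]_d,
    (forall i, state (omega i)) /\
    forall i j : 'I_n, (i < j)%N -> exists E : bool -> 'M[C]_d,
      measurement effect E /\
      prob (E true) (omega i) = 1 /\ prob (E false) (omega j) = 1.

(* k qubits in quantum theory: the quantum system on (C^2)^{(x)k} = C^(2^k) *)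
Definition wins_PD_qubits (n k : nat) : Prop :=
  wins_PD n (@q_state (2 ^ k)) (@q_effect (2 ^ k)).

Definition wins_PD_sep2 (n : nat) : Prop :=
  wins_PD n sep2_state sep2_effect.

Inductive axis := ax_x | ax_y | ax_z.

Definition pauli (k : axis) : 'M[C]_2 :=
  match k with
  | ax_x => \matrix_(i < 2, j < 2) (if i == j then 0 else 1)
  | ax_y => \matrix_(i < 2, j < 2)
      (if i == j then 0 else if (i == 0 :> nat) then - 'i else 'i)
  | ax_z => \matrix_(i < 2, j < 2)
      (if i == j then (if (i == 0 :> nat) then 1 else -1) else 0)
  end.

(* ket k s : the (normalized) eigenvector of pauli k with eigenvalue
   +1 (s = false, |k>) or -1 (s = true, |k bar>) *)
Definition ket (k : axis) (s : bool) : 'cV[C]_2 :=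
  let r := (2.-root (2 : C))^-1 in
  match k with
  | ax_z => \col_(i < 2) (if (i == 0 :> nat) then (~~ s)%:R else s%:R)
  | ax_x => \col_(i < 2) (if (i == 0 :> nat) then r else (if s then - r else r))
  | ax_y => \col_(i < 2) (if (i == 0 :> nat) then r
                           else (if s then - ('i * r) else 'i * r))
  end.

Definition prod_ket (k : axis) (s1 s2 : bool) : 'M[C]_(2 * 2, 1 * 1) :=
  tensmx (ket k s1) (ket k s2).
Definition stateA (k : axis) (s1 s2 : bool) : 'M[C]_(2 * 2) :=
  prod_ket k s1 s2 *m hadj (prod_ket k s1 s2).

End QDefs.

Definition axis_of (i : 'I_3) : axis :=
  match val i with 0 => ax_x | 1 => ax_y | _ => ax_z end.

(* the family A of twelve product states |kk>, |k kbar>, |kbar k>, |kbar kbar>,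
   k in {x,y,z}, indexed by (axis, first bar?, second bar?) *)
Definition familyA (C : numClosedFieldType) (p : 'I_3 * bool * bool) : 'M[C]_(2 * 2) :=
  stateA C (axis_of p.1.1) p.1.2 p.2.

(* Main.v *)
Require Import Defs.
From mathcomp Require Import all_boot all_order all_algebra.
From mathcomp Require Import mxtens ring.
From mathcomp Require spectral.
Set Implicit Arguments. Unset Strict Implicit. Unset Printing Implicit Defensive.
Import Order.TTheory GRing.Theory Num.Theory Num.Def.
Local Open Scope ring_scope.

Section Gen.
Variable C : numClosedFieldType.

Lemma hadjE m n (A : 'M[C]_(m, n)) i j : hadj A i j = conjC (A j i).
Proof. by rewrite /hadj !mxE. Qed.

Lemma mxDE m n (A B : 'M[C]_(m, n)) i j : (A + B) i j = A i j + B i j.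
Proof. by rewrite mxE. Qed.
Lemma mxZE m n a (A : 'M[C]_(m, n)) i j : (a *: A) i j = a * A i j.
Proof. by rewrite mxE. Qed.
Lemma mxNE m n (A : 'M[C]_(m, n)) i j : (- A) i j = - A i j.
Proof. by rewrite mxE. Qed.
Lemma mxBE m n (A B : 'M[C]_(m, n)) i j : (A - B) i j = A i j - B i j.
Proof. by rewrite !mxE. Qed.

Lemma hadjK m n (A : 'M[C]_(m, n)) : hadj (hadj A) = A.
Proof. by apply/matrixP=> i j; rewrite !hadjE conjCK. Qed.

Lemma hadjM m n p (A : 'M[C]_(m, n)) (B : 'M[C]_(n, p)) :
  hadj (A *m B) = hadj B *m hadj A.
Proof.
apply/matrixP=> i j; rewrite hadjE !mxE rmorph_sum; apply: eq_bigr => k _.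
by rewrite rmorphM !hadjE mulrC.
Qed.

Lemma hadjD m n (A B : 'M[C]_(m, n)) : hadj (A + B) = hadj A + hadj B.
Proof. by apply/matrixP=> i j; rewrite !(hadjE, mxE) rmorphD. Qed.

Lemma hadjN m n (A : 'M[C]_(m, n)) : hadj (- A) = - hadj A.
Proof. by apply/matrixP=> i j; rewrite !(hadjE, mxE) rmorphN. Qed.

Lemma hadjZ m n c (A : 'M[C]_(m, n)) : hadj (c *: A) = conjC c *: hadj A.
Proof. by apply/matrixP=> i j; rewrite !(hadjE, mxE) rmorphM. Qed.

Lemma hadj1 n : hadj (1%:M : 'M[C]_n) = 1%:M.
Proof.
apply/matrixP=> i j; rewrite !(hadjE, mxE) eq_sym.
by case: (i == j); rewrite ?rmorph1 ?rmorph0.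
Qed.

Lemma hadj0 m n : hadj (0 : 'M[C]_(m, n)) = 0.
Proof. by apply/matrixP=> i j; rewrite !(hadjE, mxE) rmorph0. Qed.

Lemma hadj_tens m n p q (A : 'M[C]_(m, n)) (B : 'M[C]_(p, q)) :
  hadj (A *t B) = hadj A *t hadj B.
Proof. by apply/matrixP=> i j; rewrite !(hadjE, mxE) rmorphM. Qed.

Lemma herm_entry n (A : 'M[C]_n) i j : Defs.hermitian A -> conjC (A j i) = A i j.
Proof. by move=> hA; rewrite -hadjE hA. Qed.

Definition qf n (A : 'M[C]_n) (v : 'cV[C]_n) := (hadj v *m A *m v) 0 0.

Lemma qfE n (A : 'M[C]_n) v :
  qf A v = \sum_i \sum_j conjC (v i 0) * A i j * v j 0.
Proof.
rewrite /qf mxE [RHS]exchange_big /=; apply: eq_bigr => j _; rewrite mxE mulr_suml.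
by apply: eq_bigr => i _; rewrite hadjE.
Qed.

Lemma normsq_ge0 n (y : 'cV[C]_n) : 0 <= (hadj y *m y) 0 0.
Proof.
rewrite mxE sumr_ge0 // => i _; rewrite hadjE mulrC; exact: mul_conjC_ge0.
Qed.

Lemma normsq_eq0 n (y : 'cV[C]_n) : (hadj y *m y) 0 0 = 0 -> y = 0.
Proof.
rewrite mxE => h; apply/matrixP => i j; rewrite ord1 mxE.
have H : forall k : 'I_n, xpredT k -> 0 <= hadj y 0 k * y k 0.
  by move=> k _; rewrite hadjE mulrC mul_conjC_ge0.
have := psumr_eq0P H h (i := i) isT.
rewrite hadjE mulrC => /eqP; rewrite mul_conjC_eq0 => /eqP //.
Qed.

End Gen.

Section Gen2.
Variable C : numClosedFieldType.

Lemma qf_lin n (F : 'M[C]_n) (q y : 'cV[C]_n) (al be : C) :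
  conjC al = al -> conjC be = be ->
  qf F (al *: q + be *: y) = al ^+ 2 * qf F q
     + al * be * ((hadj q *m F *m y) 0 0 + (hadj y *m F *m q) 0 0)
     + be ^+ 2 * qf F y.
Proof.
move=> ha hb; rewrite /qf hadjD !hadjZ ha hb.
rewrite !(mulmxDl, mulmxDr) -!scalemxAl -!scalemxAr !scalerA.
rewrite !(mxDE, mxZE).
ring.
Qed.

Lemma psd_real n (F : 'M[C]_n) v : psd F -> conjC (qf F v) = qf F v.
Proof. by move=> [_ h]; apply: conj_Creal; apply: ger0_real; apply: h. Qed.

Lemma psd_qf0 n (F : 'M[C]_n) (q : 'cV[C]_n) :
  psd F -> qf F q = 0 -> F *m q = 0.
Proof.
move=> hF hq; set y := F *m q.
set N : C := (hadj y *m y) 0 0; set a : C := qf F y.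
have N0 : 0 <= N by apply: normsq_ge0.
have a0 : 0 <= a by apply: hF.2.
have e1 : hadj q *m F *m y = hadj y *m y.
  by rewrite /y hadjM hF.1.
have e2 : hadj y *m F *m q = hadj y *m y by rewrite -mulmxA.
have h := hF.2 ((a + 1) *: q + (- N) *: y).
have e1' : (hadj q *m F *m y) 0 0 = N by rewrite e1.
have e2' : (hadj y *m F *m q) 0 0 = N by rewrite e2.
rewrite -/(qf F _) qf_lin ?hq -/a in h; last first.
- by apply: conj_Creal; rewrite realN ger0_real.
- by apply: conj_Creal; rewrite realD ?real1 ?ger0_real.
have e : (a + 1) ^+ 2 * 0 + (a + 1) * - N * (N + N) + (- N) ^+ 2 * a
   = - (N ^+ 2 * (a + 2)) by ring.
rewrite e1' e2' e oppr_ge0 in h.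
have X0 : 0 <= N ^+ 2 * (a + 2).
  by rewrite mulr_ge0 ?exprn_ge0 // addr_ge0.
have : N ^+ 2 * (a + 2) = 0 by apply/eqP; rewrite eq_le h X0.
move/eqP; rewrite mulf_eq0 expf_eq0 /= => /orP[/eqP N00|].
  by apply: normsq_eq0.
by move=> /eqP a2; have := ltr_wpDl a0 (ltr0Sn C 1); rewrite a2 ltxx.
Qed.

End Gen2.

Section Gen3.
Variable C : numClosedFieldType.

Lemma tstarE m n (M : 'M[C]_(m, n)) : (M ^t* )%sesqui = hadj M.
Proof. by rewrite /hadj map_trmx. Qed.

Lemma qf_col n (F Q : 'M[C]_n) k : (hadj Q *m F *m Q) k k = qf F (col k Q).
Proof.
rewrite qfE mxE [RHS]exchange_big /=; apply: eq_bigr => j _.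
rewrite mxE mulr_suml; apply: eq_bigr => i _.
by rewrite hadjE !mxE.
Qed.

Lemma psd_tr0 n (F w : 'M[C]_n) : psd F -> psd w -> \tr (F *m w) = 0 ->
  F *m w = 0.
Proof.
move=> hF hw htr.
have wn : w \is spectral.normalmx.
  by apply/spectral.normalmxP; rewrite tstarE hw.1.
have /spectral.orthomx_spectralP := wn.
set P := spectral.spectralmx w; set d := spectral.spectral_diag w => ew.
have Pu : P \is spectral.unitarymx by apply: spectral.spectral_unitarymx.
rewrite spectral.invmx_unitary // tstarE in ew.
set Q := hadj P in ew.
have PQ : P *m Q = 1%:M by have /spectral.unitarymxP := Pu; rewrite tstarE.
have eP : hadj Q = P by rewrite /Q hadjK.
have dk k : d 0 k = qf w (col k Q).
  rewrite -qf_col eP ew !mulmxA PQ mul1mx -!mulmxA PQ mulmx1.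
  by rewrite mxE eqxx mulr1n.
have xk k : 0 <= qf F (col k Q) by apply: hF.2.
have trE : \tr (F *m w) = \sum_k qf F (col k Q) * d 0 k.
  rewrite ew !mulmxA mxtrace_mulC !mulmxA -eP mul_mx_diag /mxtrace.
  by apply: eq_bigr => k _; rewrite mxE qf_col.
rewrite trE in htr.
have H0 : forall k : 'I_n, xpredT k -> 0 <= qf F (col k Q) * d 0 k.
  by move=> k _; rewrite mulr_ge0 // dk; apply: hw.2.
have Z : F *m Q *m diag_mx d = 0.
  apply/matrixP => a k; rewrite mul_mx_diag !mxE.
  have := psumr_eq0P H0 htr (i := k) isT.
  move/eqP; rewrite mulf_eq0 => /orP[/eqP /(psd_qf0 hF) h|/eqP ->]; last first.
    by rewrite mulr0.
  have : (F *m col k Q) a 0 = 0 by rewrite h mxE.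
  rewrite mxE => e.
  suff -> : \sum_j F a j * Q j k = 0 by rewrite mul0r.
  rewrite -[RHS]e; apply: eq_bigr => j _; by rewrite [col _ _ _ _]mxE.
by rewrite ew !mulmxA Z mul0mx.
Qed.

End Gen3.

Section Gen4.
Variable C : numClosedFieldType.

Lemma orth_count n d (om : 'I_n -> 'M[C]_d) :
  (forall i, Defs.hermitian (om i)) -> (forall i, \tr (om i) = 1) ->
  (forall i j, i != j -> om i *m om j = 0) -> (n <= d)%N.
Proof.
move=> hh htr horth.
have ex : forall i, exists k, om i k k != 0.
  move=> i; case: (boolP [exists k, om i k k != 0]) => [/existsP //|].
  rewrite negb_exists => /forallP H.
  have := htr i; rewrite /mxtrace big1 => [/esym/eqP|k _]; first by rewrite oner_eq0.
  by apply/eqP/negPn/H.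
have [f hf] := fin_all_exists ex.
pose V := \matrix_(i < n, m < d) om i m (f i).
pose W := V *m hadj V.
have eW : W = V *m hadj V by [].
clearbody W.
have Wij i j : W i j = \sum_m om i m (f i) * conjC (om j m (f j)).
  by rewrite eW mxE; apply: eq_bigr => m _; rewrite hadjE !mxE.
have WD : W = diag_mx (\row_i W i i).
  apply/matrixP => i j; rewrite !mxE; case: eqVneq => [->|nij]; first by rewrite mulr1n.
  rewrite mulr0n Wij.
  have nji : j != i by rewrite eq_sym.
  have := congr1 (fun M : 'M[C]_d => M (f j) (f i)) (horth j i nji).
  rewrite /= !mxE => e; apply: (etrans _ e); apply: eq_bigr => m _.
  by rewrite herm_entry // mulrC.
have Wii i : W i i != 0.
  rewrite Wij; apply/eqP => h0.
  have H : forall m : 'I_d, xpredT m -> 0 <= om i m (f i) * conjC (om i m (f i)).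
    by move=> m _; apply: mul_conjC_ge0.
  have := psumr_eq0P H h0 (i := f i) isT.
  by move/eqP; rewrite mul_conjC_eq0 (negbTE (hf i)).
have Wu : W \in unitmx.
  rewrite unitmxE WD det_diag unitfE; apply/prodf_neq0 => i _.
  by rewrite mxE Wii.
have := mxrank_unit Wu; rewrite eW => rk.
apply: leq_trans (rank_leq_col V).
by rewrite -{1}rk mxrankM_maxl.
Qed.

Lemma q_bound n d : wins_PD n (@q_state C d) (@q_effect C d) -> (n <= d)%N.
Proof.
move=> [om [hom hE]].
have hlt : forall i j : 'I_n, (i < j)%N -> om i *m om j = 0.
  move=> i j lij; have [E [[hEb hsum] [p1 p2]]] := hE i j lij.
  rewrite big_bool /= in hsum.
  have eF : E false = 1%:M - E true by rewrite -hsum addrC addrK.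
  have trF : \tr (E false *m om i) = 0.
    by rewrite eF mulmxBl mul1mx raddfB /= (hom i).2; move: p1; rewrite /prob => ->; rewrite subrr.
  have trT : \tr (E true *m om j) = 0.
    have eT : E true = 1%:M - E false by rewrite -hsum addrK.
    by rewrite eT mulmxBl mul1mx raddfB /= (hom j).2; move: p2; rewrite /prob => ->; rewrite subrr.
  have zF := psd_tr0 (hEb false) (hom i).1 trF.
  have zT := psd_tr0 (hEb true) (hom j).1 trT.
  have zF' : om i *m E false = 0.
    by rewrite -[om i](hom i).1.1 -[E false](hEb false).1 -hadjM zF hadj0.
  rewrite -[om i]mulmx1 -hsum mulmxDr mulmxDl zF' mul0mx addr0 -mulmxA zT.
  by rewrite mulmx0.
apply: (orth_count (om := om)).
- by move=> i; exact: (hom i).1.1.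
- by move=> i; exact: (hom i).2.
move=> i j nij; case: (ltngtP i j) => [lij|lji|eij]; first exact: hlt.
  rewrite -[om i](hom i).1.1 -[om j](hom j).1.1 -hadjM hlt // hadj0 //.
by move/eqP: nij; case; apply: val_inj.
Qed.

End Gen4.

Section Gen5.
Variable C : numClosedFieldType.

Lemma psd_diag n (d : 'rV[C]_n) : (forall i, 0 <= d 0 i) -> psd (diag_mx d).
Proof.
move=> hd; split.
  apply/matrixP => i j; rewrite hadjE !mxE eq_sym.
  case: eqVneq => [->|]; rewrite ?mulr1n ?mulr0n ?rmorph0 //.
  by apply: conj_Creal; apply: ger0_real.
move=> v; rewrite mul_mx_diag mxE sumr_ge0 // => j _; rewrite mxE hadjE.
by rewrite mulrAC mulrC mulr_ge0 // mulrC mul_conjC_ge0.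
Qed.

Lemma delta_diag n (k : 'I_n) : delta_mx k k = diag_mx (delta_mx (0 : 'I_1) k) :> 'M[C]_n.
Proof.
apply/matrixP => i j; rewrite !mxE eqxx /=.
case: (eqVneq i j) => [<-|nij]; rewrite ?mulr1n ?mulr0n ?andbb //.
case: (eqVneq i k) => [eik|] //=; rewrite eik in nij.
by rewrite eq_sym (negbTE nij).
Qed.

Lemma codelta_diag n (k : 'I_n) :
  1%:M - delta_mx k k = diag_mx (const_mx 1 - delta_mx (0 : 'I_1) k) :> 'M[C]_n.
Proof.
apply/matrixP => i j; rewrite !mxE eqxx /=.
case: (eqVneq i j) => [<-|nij]; rewrite ?mulr1n ?mulr0n ?andbb //.
case: (eqVneq i k) => [eik|] /=; rewrite ?subr0 //.
by rewrite eik in nij; rewrite eq_sym (negbTE nij) subr0.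
Qed.

Lemma tr_delta n (k : 'I_n) : \tr (delta_mx k k : 'M[C]_n) = 1.
Proof.
rewrite /mxtrace (bigD1 k) //= mxE !eqxx big1 ?addr0 // => i /negbTE nik.
by rewrite mxE nik.
Qed.

Lemma win4 : wins_PD_qubits C 12 4.
Proof.
rewrite /wins_PD_qubits /=.
pose w (i : 'I_12) : 'I_(2 ^ 4) := widen_ord (isT : (12 <= 2 ^ 4)%N) i.
exists (fun i => delta_mx (w i) (w i)); split.
  move=> i; split; last exact: tr_delta.
  by rewrite delta_diag; apply: psd_diag => j; rewrite mxE ler0n.
move=> i j lij.
exists (fun b : bool => if b then delta_mx (w i) (w i) else 1%:M - delta_mx (w i) (w i)).
split; [split|split].
- case; [rewrite delta_diag | rewrite codelta_diag]; apply: psd_diag => k.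
    by rewrite mxE ler0n.
  by rewrite !mxE /=; case: (k == w i); rewrite /= ?subrr ?subr0 ?ler01.
- by rewrite big_bool /= addrC subrK.
- by rewrite /prob mul_delta_mx tr_delta.
- have nij : w i != w j by rewrite -val_eqE /= neq_ltn lij.
  by rewrite /prob mulmxBl mul1mx mul_delta_mx_0 ?subr0 ?tr_delta.
Qed.


Lemma part1 : ( ~ wins_PD_qubits C 12 3 /\ wins_PD_qubits C 12 4 /\ (forall k : nat, wins_PD_qubits C 12 k -> (4 <= k)%N) ).
Proof.
have H : forall k : nat, wins_PD_qubits C 12 k -> (4 <= k)%N.
  move=> k /q_bound; case: k => [|[|[|[|k]]]] //.
split; [|split] => //; last exact: win4.
by move/H.
Qed.

End Gen5.

Lemma ord2P (i : 'I_2) : i = ord0 \/ i = ord_max.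
Proof. by case: i => [[|[|]]] //= ?; [left|right]; apply: val_inj. Qed.

Lemma ord2_01 : (ord0 == ord_max :> 'I_2) = false. Proof. by []. Qed.
Lemma ord2_10 : (ord_max == ord0 :> 'I_2) = false. Proof. by []. Qed.

Section Two.
Variable C : numClosedFieldType.

Lemma sum2 (F : 'I_2 -> C) : \sum_i F i = F ord0 + F ord_max.
Proof. by rewrite big_ord_recl big_ord1; congr (_ + F _); apply: val_inj. Qed.

Definition sgn (s : bool) : C := if s then -1 else 1.
Definition sig (k : axis) (s : bool) : 'M[C]_2 := sgn s *: pauli C k.
Definition rho (k : axis) (s : bool) : 'M[C]_2 := ket C k s *m hadj (ket C k s).

Lemma r2 : (2.-root (2 : C))^-1 * (2.-root (2 : C))^-1 = 2^-1.
Proof. by rewrite -invfM -expr2 rootCK. Qed.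

Lemma rreal : conjC (2.-root (2 : C))^-1 = (2.-root (2 : C))^-1.
Proof.
apply: conj_Creal; rewrite realV; apply: ger0_real.
by rewrite rootC_ge0 // ler0n.
Qed.

Lemma ii : ('i : C) * 'i = -1.
Proof. by rewrite -expr2 sqrCi. Qed.

Lemma conjN' (x : C) : conjC (- x) = - conjC x. Proof. exact: rmorphN. Qed.
Lemma conjM' (x y : C) : conjC (x * y) = conjC x * conjC y. Proof. exact: rmorphM. Qed.
Lemma conj1' : conjC (1 : C) = 1. Proof. exact: rmorph1. Qed.
Lemma conj0' : conjC (0 : C) = 0. Proof. exact: rmorph0. Qed.
Lemma two_inv : (2 : C)^-1 * 2 = 1. Proof. by rewrite mulVf // pnatr_eq0. Qed.

Lemma rhoE k s : rho k s = 2^-1 *: (1%:M + sig k s).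
Proof.
have h := r2; have h2 := ii; have h3 := two_inv.
apply/matrixP => i j; rewrite /rho /sig.
case: k; case: s; case: (ord2P i) => ->; case: (ord2P j) => ->;
rewrite /= !mxE big_ord1 ?hadjE ?mxE /= ?ord2_01 ?ord2_10 /= ?mulr1n ?mulr0n
  /sgn ?conjN' ?conjM' ?conjCi ?rreal ?conj1' ?conj0';
ring: h h2 h3.
Qed.

Lemma tr2 (A : 'M[C]_2) : \tr A = A ord0 ord0 + A ord_max ord_max.
Proof. by rewrite /mxtrace sum2. Qed.

Lemma tr_pauli k : \tr (pauli C k) = 0.
Proof. by rewrite tr2; case: k; rewrite !mxE /=; ring. Qed.

Lemma tr_pp_same k : \tr (pauli C k *m pauli C k) = 2.
Proof.
have h2 := ii.
by rewrite tr2; case: k; rewrite !mxE !sum2 !mxE /= ?ord2_01 ?ord2_10 /=; ring: h2.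
Qed.

Lemma tr_pp_diff k k' : k <> k' -> \tr (pauli C k *m pauli C k') = 0.
Proof.
have h2 := ii.
by rewrite tr2; case: k; case: k' => // _; rewrite !mxE !sum2 !mxE /= ?ord2_01 ?ord2_10 /=; ring: h2.
Qed.

Lemma hadj_pauli k : hadj (pauli C k) = pauli C k.
Proof.
apply/matrixP => i j; rewrite hadjE.
case: k; case: (ord2P i) => ->; case: (ord2P j) => ->;
by rewrite !mxE /= ?ord2_01 ?ord2_10 /= ?conjN' ?conjCi ?conj1' ?conj0' ?opprK.
Qed.

Lemma sgn_real s : conjC (sgn s) = sgn s.
Proof. by case: s; rewrite /sgn ?conjN' conj1'. Qed.

Lemma sgn2 s : sgn s * sgn s = 1.
Proof. by case: s; rewrite /sgn ?mulrNN mulr1. Qed.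

Lemma sgnN s : sgn (~~ s) = - sgn s.
Proof. by case: s; rewrite /sgn /= ?opprK. Qed.

Lemma sigN k s : sig k (~~ s) = - sig k s.
Proof. by rewrite /sig sgnN scaleNr. Qed.

Lemma hadj_sig k s : hadj (sig k s) = sig k s.
Proof. by rewrite /sig hadjZ sgn_real hadj_pauli. Qed.

Lemma tr_rho k s : \tr (rho k s) = 1.
Proof.
rewrite rhoE mxtraceZ mxtraceD mxtrace1 /sig mxtraceZ tr_pauli mulr0 addr0.
by rewrite mulVf // pnatr_eq0.
Qed.

Lemma tr_rho_sig_same k s s' : \tr (rho k s *m sig k s') = sgn s * sgn s'.
Proof.
rewrite rhoE /sig -scalemxAl mxtraceZ mulmxDl mul1mx mxtraceD -scalemxAr mxtraceZ.
rewrite mxtraceZ -scalemxAl mxtraceZ tr_pp_same tr_pauli.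
have h3 := two_inv; ring: h3.
Qed.

Lemma tr_rho_sig_diff k k' s s' : k <> k' -> \tr (rho k s *m sig k' s') = 0.
Proof.
move=> nk.
rewrite rhoE /sig -scalemxAl mxtraceZ mulmxDl mul1mx mxtraceD -scalemxAr mxtraceZ.
rewrite mxtraceZ -scalemxAl mxtraceZ tr_pp_diff // tr_pauli.
ring.
Qed.

Lemma hadj_rho k s : hadj (rho k s) = rho k s.
Proof. by rewrite /rho hadjM hadjK. Qed.

Lemma psd_rank1 n (u : 'cV[C]_n) : psd (u *m hadj u).
Proof.
split; first by rewrite /Defs.hermitian hadjM hadjK.
move=> v.
have e : hadj v *m (u *m hadj u) *m v = hadj (hadj u *m v) *m (hadj u *m v).
  by rewrite hadjM hadjK !mulmxA.
by rewrite e; apply: normsq_ge0.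
Qed.

End Two.

Section Seven.
Variable C : numClosedFieldType.

Lemma core (a b x y u v : C) :
  x \is Num.real -> y \is Num.real -> u \is Num.real -> v \is Num.real ->
  0 <= a -> 0 <= b -> x ^+ 2 + y ^+ 2 <= a ^+ 2 -> u ^+ 2 + v ^+ 2 <= b ^+ 2 ->
  0 <= a * b + (x * u + y * v).
Proof.
move=> rx ry ru rv a0 b0 hxy huv.
set w := x * u + y * v.
have rw : w \is Num.real by rewrite rpredD ?rpredM.
have sq : forall r : C, r \is Num.real -> 0 <= r ^+ 2.
  by move=> r hr; apply: real_exprn_even_ge0.
have e : (a * b) ^+ 2 - w ^+ 2 = (a ^+ 2 - (x ^+ 2 + y ^+ 2)) * b ^+ 2
    + (x ^+ 2 + y ^+ 2) * (b ^+ 2 - (u ^+ 2 + v ^+ 2)) + (x * v - y * u) ^+ 2.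
  by rewrite /w; ring.
have H : w ^+ 2 <= (a * b) ^+ 2.
  have s1 : 0 <= x ^+ 2 + y ^+ 2 by rewrite addr_ge0 ?sq.
  have s3 : 0 <= (x * v - y * u) ^+ 2 by apply: sq; rewrite realB ?realM.
  rewrite -subr_ge0 e; apply: addr_ge0 => //; apply: addr_ge0; apply: mulr_ge0;
    rewrite ?subr_ge0 ?exprn_ge0 //.
have ab0 : 0 <= a * b by rewrite mulr_ge0.
have : `|w| <= a * b.
  rewrite -ler_sqr ?nnegrE ?normr_ge0 // real_normK //.
move=> /(real_ler_normlP rw) [h1 _].
by rewrite -subr_ge0 opprK in h1.
Qed.

Lemma tr_tens m n (A : 'M[C]_m) (B : 'M[C]_n) : \tr (A *t B) = \tr A * \tr B.
Proof. by rewrite /mxtrace mulr_sum; apply: eq_bigr => k _; rewrite mxE. Qed.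

Lemma tr_tens_mul m n (A P : 'M[C]_m) (B Q : 'M[C]_n) :
  \tr ((A *t B) *m (P *t Q)) = \tr (A *m P) * \tr (B *m Q).
Proof. by rewrite tensmx_mul tr_tens. Qed.

Lemma one_tens m n : (1%:M : 'M[C]_m) *t (1%:M : 'M[C]_n) = 1%:M.
Proof.
apply/matrixP => i j.
case: (mxtens_indexP i) => i1 i2; case: (mxtens_indexP j) => j1 j2.
rewrite tensmxE !mxE (can_eq (@mxtens_indexK m n)) xpair_eqE.
by case: (i1 == j1); case: (i2 == j2); rewrite /= ?mulr1 ?mulr0.
Qed.

Lemma tr_hadj n (M : 'M[C]_n) : \tr (hadj M) = conjC (\tr M).
Proof. by rewrite /mxtrace rmorph_sum; apply: eq_bigr => i _; rewrite hadjE. Qed.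

Definition bl (A : 'M[C]_2) k := \tr (A *m pauli C k).

Lemma bl_real A k : Defs.hermitian A -> bl A k \is Num.real.
Proof.
move=> hA; rewrite CrealE /bl -tr_hadj hadjM hadj_pauli hA mxtrace_mulC.
by [].
Qed.

Definition v2 (x y : C) : 'cV[C]_2 := \col_i (if i == ord0 then x else y).

Lemma qf2 (A : 'M[C]_2) x y : qf A (v2 x y) =
  conjC x * A ord0 ord0 * x + conjC x * A ord0 ord_max * y
  + conjC y * A ord_max ord0 * x + conjC y * A ord_max ord_max * y.
Proof. by rewrite qfE !sum2 !mxE /= ?ord2_10; ring. Qed.

Lemma psd2 (A : 'M[C]_2) : psd A ->
  [/\ 0 <= A ord0 ord0, 0 <= A ord_max ord_max,
      A ord_max ord0 = conjC (A ord0 ord_max) &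
      A ord0 ord_max * conjC (A ord0 ord_max) <= A ord0 ord0 * A ord_max ord_max].
Proof.
move=> hA; have hq := hA.2.
set p := A ord0 ord0; set q := A ord_max ord_max; set z := A ord0 ord_max.
have ez : A ord_max ord0 = conjC z by rewrite -(herm_entry _ _ hA.1).
have p0 : 0 <= p.
  by have := hq (v2 1 0); rewrite -/(qf A _) qf2 conj1' conj0' !(mul0r,mulr0,mul1r,mulr1,addr0,add0r).
have q0 : 0 <= q.
  by have := hq (v2 0 1); rewrite -/(qf A _) qf2 conj1' conj0' !(mul0r,mulr0,mul1r,mulr1,addr0,add0r).
have cp : conjC p = p by apply: conj_Creal; apply: ger0_real.
have cq : conjC q = q by apply: conj_Creal; apply: ger0_real.
split => //; rewrite -subr_ge0.
have h1 := hq (v2 q (- conjC z)); have h2 := hq (v2 (- z) p).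
rewrite -/(qf A _) qf2 ez -/p -/q -/z conjN' conjCK cq in h1.
rewrite -/(qf A _) qf2 ez -/p -/q -/z conjN' cp in h2.
set D := p * q - z * conjC z.
have e1 : q * p * q + q * z * - conjC z + - z * conjC z * q + - z * q * - conjC z
   = q * D by rewrite /D; ring.
have e2 : - conjC z * p * - z + - conjC z * z * p + p * conjC z * - z + p * q * p
   = p * D by rewrite /D; ring.
rewrite e1 in h1; rewrite e2 in h2.
case: (eqVneq (p + q) 0) => [pq0|pq0].
  move/eqP: pq0; rewrite paddr_eq0 // => /andP[/eqP p00 /eqP q00].
  have h3 := hq (v2 1 (- conjC z)).
  rewrite -/(qf A _) qf2 ez -/p -/q -/z conjN' conjCK conj1' p00 q00 in h3.
  have e3 : 1 * 0 * 1 + 1 * z * - conjC z + - z * conjC z * 1 + - z * 0 * - conjC z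
     = (D + D) by rewrite /D p00 q00; ring.
  rewrite e3 in h3.
  have -> : D = 2^-1 * (D + D) by have t2 := two_inv C; ring: t2.
  by rewrite mulr_ge0 // invr_ge0 ler0n.
have hpq : 0 < p + q by rewrite lt0r pq0 addr_ge0.
by rewrite -(pmulr_rge0 _ hpq) mulrDl addr_ge0.
Qed.

Lemma tr_psd_ge0 (A : 'M[C]_2) : psd A -> 0 <= \tr A.
Proof. by move=> /psd2 [p0 q0 _ _]; rewrite tr2 addr_ge0. Qed.

Lemma bloch (A : 'M[C]_2) : psd A ->
  bl A ax_x ^+ 2 + bl A ax_y ^+ 2 + bl A ax_z ^+ 2 <= \tr A ^+ 2.
Proof.
move=> hA; have [p0 q0 ez hD] := psd2 hA.
rewrite -subr_ge0 in hD.
rewrite /bl !tr2 !mxE !sum2 !mxE /= ?ord2_01 ?ord2_10 /= ez.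
set p := A ord0 ord0; set q := A ord_max ord_max; set z := A ord0 ord_max.
rewrite -subr_ge0.
have h2 := ii C.
have -> : (p + q) ^+ 2 -
   ((p * 0 + z * 1 + (conjC z * 1 + q * 0)) ^+ 2 +
    (p * 0 + z * 'i + (conjC z * - 'i + q * 0)) ^+ 2 +
    (p * 1 + z * 0 + (conjC z * 0 + q * -1)) ^+ 2)
  = 4 * (p * q - z * conjC z) by ring: h2.
by apply: mulr_ge0.
Qed.

Lemma bl_one (A : 'M[C]_2) k : psd A -> bl A k ^+ 2 <= \tr A ^+ 2.
Proof.
move=> hA; apply: le_trans (bloch hA).
have sq : forall k', 0 <= bl A k' ^+ 2.
  by move=> k'; apply: real_exprn_even_ge0 => //; apply: bl_real; apply: hA.1.
case: k.
- by rewrite -addrA lerDl addr_ge0.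
- by rewrite [X in X + _]addrC -addrA lerDl addr_ge0.
- by rewrite lerDr addr_ge0.
Qed.

Lemma bl_pair (A : 'M[C]_2) k k' : psd A -> k <> k' ->
  bl A k ^+ 2 + bl A k' ^+ 2 <= \tr A ^+ 2.
Proof.
move=> hA nk; apply: le_trans (bloch hA).
have sq : forall k', 0 <= bl A k' ^+ 2.
  by move=> k''; apply: real_exprn_even_ge0 => //; apply: bl_real; apply: hA.1.
case: k nk; case: k' => // _.
- by rewrite lerDl.
- by rewrite [X in _ <= X]addrAC lerDl.
- by rewrite [X in X <= _]addrC lerDl.
- by rewrite -addrA lerDr.
- by rewrite [X in X <= _]addrC [X in _ <= X]addrAC lerDl.
- by rewrite [X in X <= _]addrC -addrA lerDr.
Qed.

End Seven.

Section Eight.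
Variable C : numClosedFieldType.

Definition good (M : 'M[C]_(2 * 2)) : Prop :=
  hadj M = M /\ forall A B : 'M[C]_2, psd A -> psd B ->
    0 <= \tr (A *t B) + \tr ((A *t B) *m M).

Lemma inv2_real : conjC (2^-1 : C) = 2^-1.
Proof. by apply: conj_Creal; rewrite realV ger0_real // ler0n. Qed.

Lemma good_effect M : good M -> sep2_effect (2^-1 *: (1%:M + M)).
Proof.
move=> [hM pM]; split.
  by rewrite /Defs.hermitian hadjZ inv2_real hadjD hadj1 hM.
move=> X [m [A [B [hAB ->]]]].
rewrite mulmx_suml raddf_sum /=; apply: sumr_ge0 => i _.
rewrite -scalemxAr mxtraceZ mulmxDr mulmx1 mxtraceD.
by rewrite mulr_ge0 ?invr_ge0 ?ler0n // pM //; case: (hAB i).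
Qed.

Lemma ge0_eq (a b : C) : 0 <= a -> a = b -> 0 <= b.
Proof. by move=> h <-. Qed.

Lemma tr_sig (A : 'M[C]_2) k s : \tr (A *m sig C k s) = sgn C s * bl A k.
Proof. by rewrite /sig -scalemxAr mxtraceZ. Qed.

Lemma tens_oppl m n p q (A : 'M[C]_(m, n)) (B : 'M[C]_(p, q)) : (- A) *t B = - (A *t B).
Proof. by apply/matrixP => i j; rewrite !mxE mulNr. Qed.
Lemma tens_oppr m n p q (A : 'M[C]_(m, n)) (B : 'M[C]_(p, q)) : A *t (- B) = - (A *t B).
Proof. by apply/matrixP => i j; rewrite !mxE mulrN. Qed.

Definition M1 k s : 'M[C]_(2 * 2) := sig C k s *t (1%:M : 'M[C]_2).
Definition M2 k s : 'M[C]_(2 * 2) := (1%:M : 'M[C]_2) *t sig C k s.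
Definition M3 k k' s1 s2 t1 t2 : 'M[C]_(2 * 2) :=
  sig C k s1 *t sig C k s2 - sig C k' t1 *t sig C k' t2.

Lemma tr_M1 (A B : 'M[C]_2) k s :
  \tr ((A *t B) *m M1 k s) = \tr (A *m sig C k s) * \tr B.
Proof. by rewrite /M1 tr_tens_mul mulmx1. Qed.
Lemma tr_M2 (A B : 'M[C]_2) k s :
  \tr ((A *t B) *m M2 k s) = \tr A * \tr (B *m sig C k s).
Proof. by rewrite /M2 tr_tens_mul mulmx1. Qed.
Lemma tr_M3 (A B : 'M[C]_2) k k' s1 s2 t1 t2 :
  \tr ((A *t B) *m M3 k k' s1 s2 t1 t2) =
  \tr (A *m sig C k s1) * \tr (B *m sig C k s2)
  - \tr (A *m sig C k' t1) * \tr (B *m sig C k' t2).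
Proof. by rewrite /M3 mulmxBr raddfB /= !tr_tens_mul. Qed.

Lemma sgn_real' s : sgn C s \is Num.real.
Proof. by case: s; rewrite /sgn ?realN real1. Qed.

Lemma good_M1 k s : good (M1 k s).
Proof.
split; first by rewrite /M1 hadj_tens hadj_sig hadj1.
move=> A B hA hB; rewrite tr_M1 tr_sig tr_tens.
have t2 := sgn2 C s.
apply: (ge0_eq (core (y := 0) (v := 0) (x := sgn C s * bl A k) (u := \tr B) _ _ _ _
   (tr_psd_ge0 hA) (tr_psd_ge0 hB) _ _)).
- by rewrite realM ?sgn_real' ?bl_real //; case: hA.
- exact: real0.
- by rewrite ger0_real // tr_psd_ge0.
- exact: real0.
- by rewrite expr0n addr0 exprMn (_ : sgn C s ^+ 2 = 1) ?mul1r ?(bl_one _ hA) // expr2.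
- by rewrite expr0n addr0.
- by ring.
Qed.

Lemma good_M2 k s : good (M2 k s).
Proof.
split; first by rewrite /M2 hadj_tens hadj_sig hadj1.
move=> A B hA hB; rewrite tr_M2 tr_sig tr_tens.
have t2 := sgn2 C s.
apply: (ge0_eq (core (y := 0) (v := 0) (x := \tr A) (u := sgn C s * bl B k) _ _ _ _
   (tr_psd_ge0 hA) (tr_psd_ge0 hB) _ _)).
- by rewrite ger0_real // tr_psd_ge0.
- exact: real0.
- by rewrite realM ?sgn_real' ?bl_real //; case: hB.
- exact: real0.
- by rewrite expr0n addr0.
- by rewrite expr0n addr0 exprMn (_ : sgn C s ^+ 2 = 1) ?mul1r ?(bl_one _ hB) // expr2.
- by ring.
Qed.

Lemma good_M3 k k' s1 s2 t1 t2 : k <> k' -> good (M3 k k' s1 s2 t1 t2).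
Proof.
move=> nk; split.
  by rewrite /M3 hadjD hadjN !hadj_tens !hadj_sig.
move=> A B hA hB; rewrite tr_M3 !tr_sig tr_tens.
have e1 := sgn2 C s1; have e2 := sgn2 C s2; have e3 := sgn2 C t1; have e4 := sgn2 C t2.
have rA := bl_real k hA.1; have rA' := bl_real k' hA.1.
have rB := bl_real k hB.1; have rB' := bl_real k' hB.1.
apply: (ge0_eq (core (x := sgn C s1 * sgn C s2 * bl A k) (y := - (sgn C t1 * sgn C t2 * bl A k'))
  (u := bl B k) (v := bl B k') _ _ _ _ (tr_psd_ge0 hA) (tr_psd_ge0 hB) _ _)).
- by rewrite !realM ?sgn_real'.
- by rewrite realN !realM ?sgn_real'.
- by [].
- by [].
- have -> : (sgn C s1 * sgn C s2 * bl A k) ^+ 2 + (- (sgn C t1 * sgn C t2 * bl A k')) ^+ 2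
     = bl A k ^+ 2 + bl A k' ^+ 2 by ring: e1 e2 e3 e4.
  exact: bl_pair.
- exact: bl_pair.
- by ring.
Qed.

End Eight.

Section Nine.
Variable C : numClosedFieldType.

Lemma dist (wi wj M : 'M[C]_(2 * 2)) : good M -> good (- M) ->
  \tr wi = 1 -> \tr wj = 1 -> \tr (wi *m M) = 1 -> \tr (wj *m M) = -1 ->
  exists E, measurement (@sep2_effect C) (fun b : bool => if b then E else 1%:M - E)
     /\ prob E wi = 1 /\ prob E wj = 0.
Proof.
move=> gM gN ti tj mi mj; exists (2^-1 *: (1%:M + M)).
have t2 := two_inv C.
have e : 1%:M - 2^-1 *: (1%:M + M) = 2^-1 *: (1%:M + - M) :> 'M[C]_(2 * 2).
  have g : forall x m : C, x - 2^-1 * (x + m) = 2^-1 * (x - m) by move=> x m; field.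
  by apply/matrixP => i j; rewrite !(mxDE, mxZE, mxBE, mxNE) g.
split; [split|split].
- by case; rewrite ?e; apply: good_effect.
- by rewrite big_bool /= addrC subrK.
- rewrite /prob mxtrace_mulC -scalemxAr mxtraceZ mulmxDr mulmx1 mxtraceD ti mi.
  by field.
- rewrite /prob mxtrace_mulC -scalemxAr mxtraceZ mulmxDr mulmx1 mxtraceD tj mj.
  by ring.
Qed.

Lemma stateA_tens k s1 s2 : stateA C k s1 s2 = rho C k s1 *t rho C k s2.
Proof. by rewrite /stateA /prod_ket hadj_tens tensmx_mul. Qed.

Lemma tr_stateA k s1 s2 : \tr (stateA C k s1 s2) = 1.
Proof. by rewrite stateA_tens tr_tens !tr_rho mulr1. Qed.

Lemma sep2_stateA k s1 s2 : sep2_state (stateA C k s1 s2).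
Proof.
split; last exact: tr_stateA.
exists 1%N, (fun _ => rho C k s1), (fun _ => rho C k s2); split.
  by move=> _; split; apply: psd_rank1.
by rewrite big_ord1 stateA_tens.
Qed.

Lemma axis_of_inj (i j : 'I_3) : i != j -> axis_of i <> axis_of j.
Proof.
case: i => [[|[|[|i]]] hi] //; case: j => [[|[|[|j]]] hj] //=;
by rewrite -val_eqE.
Qed.

Lemma sgn_neq s t : s != t -> sgn C t * sgn C s = -1.
Proof. by case: s; case: t => //= _; rewrite /sgn ?mulr1 ?mul1r. Qed.

Lemma neg_sig k s : - sig C k s = sig C k (~~ s).
Proof. by rewrite sigN. Qed.

Lemma pd : pairwise_distinguishable (@sep2_effect C) (familyA C).
Proof.
move=> [[ik s1] s2] [[jk t1] t2] nij; rewrite /familyA /=.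
set k := axis_of ik; set k' := axis_of jk.
have ts := tr_stateA.
case: (eqVneq ik jk) => [eik|nik].
  rewrite /k' -eik -/k; rewrite eik in nij.
  case: (eqVneq s1 t1) => [es1|ns1].
    rewrite es1 in nij.
    have ns2 : s2 != t2 by apply: contra nij => /eqP ->.
    apply: (dist (M := M2 C k s2)) => //.
    - exact: good_M2.
    - by rewrite /M2 -tens_oppr neg_sig; apply: good_M2.
    - by rewrite stateA_tens tr_M2 tr_rho tr_rho_sig_same sgn2 mulr1.
    - by rewrite stateA_tens tr_M2 tr_rho tr_rho_sig_same sgn_neq // mul1r.
  apply: (dist (M := M1 C k s1)) => //.
  - exact: good_M1.
  - by rewrite /M1 -tens_oppl neg_sig; apply: good_M1.
  - by rewrite stateA_tens tr_M1 tr_rho tr_rho_sig_same sgn2 mulr1.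
  - by rewrite stateA_tens tr_M1 tr_rho tr_rho_sig_same sgn_neq // mulr1.
have nk := axis_of_inj nik.
apply: (dist (M := M3 C k k' s1 s2 t1 t2)) => //.
- exact: good_M3.
- rewrite /M3 opprB; apply: good_M3 => h; exact: nk (esym h).
- rewrite stateA_tens tr_M3 !tr_rho_sig_same !sgn2 (tr_rho_sig_diff _ _ _ nk).
  by rewrite mul0r subr0 mulr1.
- rewrite stateA_tens tr_M3 !tr_rho_sig_same !sgn2 (tr_rho_sig_diff _ _ _ (fun h => nk (esym h))).
  by rewrite mul0r sub0r mulr1.
Qed.

End Nine.

Lemma card12 : #|{: 'I_3 * bool * bool}| = 12%N.
Proof. by rewrite !card_prod card_ord card_bool. Qed.

Definition f12 (i : 'I_12) : 'I_3 * bool * bool := enum_val (cast_ord (esym card12) i).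

Lemma f12_inj : injective f12.
Proof. by move=> i j /enum_val_inj /cast_ord_inj. Qed.

Lemma win_sep (C : numClosedFieldType) : wins_PD_sep2 C 12.
Proof.
exists (fun i => familyA C (f12 i)); split.
  by move=> i; case: (f12 i) => [[ik s1] s2]; apply: sep2_stateA.
move=> i j lij.
have nij : f12 i != f12 j.
  by apply/negP => /eqP /f12_inj eij; move: lij; rewrite eij ltnn.
have [E [hm [p1 p2]]] := @pd C _ _ nij.
exists (fun b : bool => if b then E else 1%:M - E); split => //; split => //.
have tj : \tr (familyA C (f12 j)) = 1.
  by case: (f12 j) => [[jk t1] t2]; apply: tr_stateA.
by rewrite /prob mulmxBl mul1mx raddfB /= tj; move: p2; rewrite /prob => ->; rewrite subr0.
Qed.

Local Close Scope ring_scope.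

Theorem theorem1 (C : numClosedFieldType) :
  ( ~ wins_PD_qubits C 12 3 /\ wins_PD_qubits C 12 4 /\
    (forall k : nat, wins_PD_qubits C 12 k -> (4 <= k)%N) ) /\
  ( (forall p, sep2_state (familyA C p)) /\
    pairwise_distinguishable (@sep2_effect C) (familyA C) /\
    wins_PD_sep2 C 12 ).
Proof.
split; first exact: part1.
split; last split.
- by move=> [[ik s1] s2]; apply: sep2_stateA.
- exact: pd.
- exact: win_sep.
Qed.
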